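(* Let $G$ be a group acting properly by isometries on a metric space $X$ and let $H\le G$. Assume: (I) $\omega_H<\infty$; (II) $H$ is divergent; (III) there exist subgroups $K\le G$ and $F\le H\cap K$ such that $F$ is a proper finite subgroup of $K$ and the natural morphism $H\ast_F K\to G$ is injective. Then $\omega_H<\omega_G$.
   Context: Proper means $B_G(x,r)=\{g\in G: d(x,gx)\le r\}$ is finite for all $x\in X$, $r\ge0$. For $o\in X$: $\omega_H=\limsup_{r\to\infty}\frac1r\log|B_G(o,r)\cap H|$ and $\omega_G$ is the same with $H=G$. The Poincaré series is $\mathcal P_H(s)=\sum_{h\in H}e^{-s\,d(o,ho)}$; $H$ is divergent if $\mathcal P_H(s)$ diverges at $s=\omega_H$. *)

(* Defs.v *)
From Stdlib Require Import Reals List.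
From Coquelicot Require Import Coquelicot.
Open Scope R_scope.
Import ListNotations.

Record IsGroup (G : Type) (mul : G -> G -> G) (one : G) (inv : G -> G) : Prop := {
  grp_assoc : forall a b c, mul a (mul b c) = mul (mul a b) c;
  grp_mul1g : forall a, mul one a = a;
  grp_mulg1 : forall a, mul a one = a;
  grp_mulVg : forall a, mul (inv a) a = one;
  grp_mulgV : forall a, mul a (inv a) = one }.

Record IsSubgroup (G : Type) (mul : G -> G -> G) (one : G) (inv : G -> G)
    (H : G -> Prop) : Prop := {
  sub_one : H one;
  sub_mul : forall a b, H a -> H b -> H (mul a b);
  sub_inv : forall a, H a -> H (inv a) }.

Definition finite_set {T : Type} (P : T -> Prop) : Prop :=
  exists l : list T, forall x, P x -> In x l.

Definition has_card {T : Type} (P : T -> Prop) (n : nat) : Prop :=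
  exists l : list T, NoDup l /\ (forall x, P x <-> In x l) /\ length l = n.

Record IsMetric (X : Type) (d : X -> X -> R) : Prop := {
  met_ge0 : forall x y, 0 <= d x y;
  met_eq0 : forall x y, d x y = 0 <-> x = y;
  met_sym : forall x y, d x y = d y x;
  met_tri : forall x y z, d x z <= d x y + d y z }.

Record IsIsometricAction (G : Type) (mul : G -> G -> G) (one : G)
    (X : Type) (d : X -> X -> R) (act : G -> X -> X) : Prop := {
  act_one : forall x, act one x = x;
  act_mul : forall g h x, act (mul g h) x = act g (act h x);
  act_isom : forall g x y, d (act g x) (act g y) = d x y }.

Definition ballG (G X : Type) (d : X -> X -> R) (act : G -> X -> X)
    (x : X) (r : R) (g : G) : Prop := d x (act g x) <= r.

Definition ProperAction (G X : Type) (d : X -> X -> R) (act : G -> X -> X) : Prop :=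
  forall x r, 0 <= r -> finite_set (ballG G X d act x r).

(* critical exponent
   omega_H = limsup_{r -> oo} (1/r) log |B_G(o,r) ∩ H|,
   the limsup being inf_M sup_{r >= M} (in the extended reals). *)
Definition growth_tail (G X : Type) (d : X -> X -> R) (act : G -> X -> X)
    (o : X) (H : G -> Prop) (M : R) : Rbar :=
  Lub_Rbar (fun y => exists r n, M <= r /\ 0 < r /\
             has_card (fun g => ballG G X d act o r g /\ H g) n /\
             y = ln (INR n) / r).

Definition crit_exp (G X : Type) (d : X -> X -> R) (act : G -> X -> X)
    (o : X) (H : G -> Prop) : Rbar :=
  Rbar_glb (fun z => exists M : R, z = growth_tail G X d act o H M).

(* The Poincaré series  sum_{h in H} exp(-s d(o, h o))  diverges
   (series of nonnegative terms: its finite partial sums are unbounded). *)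
Definition poincare_diverges (G X : Type) (d : X -> X -> R) (act : G -> X -> X)
    (o : X) (H : G -> Prop) (s : R) : Prop :=
  forall B : R, exists l : list G, NoDup l /\ (forall h, In h l -> H h) /\
    B < fold_right (fun h acc => exp (- s * d o (act h o)) + acc) 0 l.

Definition divergent_subgroup (G X : Type) (d : X -> X -> R) (act : G -> X -> X)
    (o : X) (H : G -> Prop) : Prop :=
  poincare_diverges G X d act o H (real (crit_exp G X d act o H)).

(* ---------- amalgamated free product H *_F K ----------
   H *_F K is presented (as a monoid, hence a group) by words in the letters
   inl h (h in H), inr k (k in K), modulo the congruence generated by the
   multiplication tables of H and K, identification of F in H with F in K,
   and deletion of the identity. *)
Section Amalgam.
Variables (G : Type) (mul : G -> G -> G) (one : G) (H K F : G -> Prop).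

Definition amal_word_ok (w : list (G + G)) : Prop :=
  forall a, In a w -> match a with inl h => H h | inr k => K k end.

Inductive amal_rel : list (G + G) -> list (G + G) -> Prop :=
  | amal_mulH a b : H a -> H b -> amal_rel [inl a; inl b] [inl (mul a b)]
  | amal_mulK a b : K a -> K b -> amal_rel [inr a; inr b] [inr (mul a b)]
  | amal_F f : F f -> amal_rel [inl f] [inr f]
  | amal_oneH : amal_rel [inl one] []
  | amal_oneK : amal_rel [inr one] [].

Inductive amal_eq : list (G + G) -> list (G + G) -> Prop :=
  | amal_ctx u v w w' : amal_rel w w' -> amal_eq (u ++ w ++ v) (u ++ w' ++ v)
  | amal_refl w : amal_eq w w
  | amal_sym w w' : amal_eq w w' -> amal_eq w' w
  | amal_trans w1 w2 w3 : amal_eq w1 w2 -> amal_eq w2 w3 -> amal_eq w1 w3.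

Definition amal_eval (w : list (G + G)) : G :=
  fold_right (fun a acc => mul (match a with inl h => h | inr k => k end) acc) one w.

Definition amalgam_injective : Prop :=
  forall w1 w2, amal_word_ok w1 -> amal_word_ok w2 ->
    amal_eval w1 = amal_eval w2 -> amal_eq w1 w2.
End Amalgam.

(* Main.v *)
Require Import Defs.
From Stdlib Require Import Reals List.
From Coquelicot Require Import Coquelicot.
From Stdlib Require Import Lra Lia ZArith.
From Stdlib Require Import ClassicalEpsilon FunctionalExtensionality PropExtensionality.
Import ListNotations.

Section GroupFacts.
Variables (G : Type) (mul : G -> G -> G) (one : G) (inv : G -> G).
Hypothesis HG : IsGroup G mul one inv.

Lemma g_cancel_l a x y : mul a x = mul a y -> x = y.
Proof.
  intro E. rewrite <- (grp_mul1g _ _ _ _ HG x), <- (grp_mul1g _ _ _ _ HG y).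
  rewrite <- (grp_mulVg _ _ _ _ HG a), <- !(grp_assoc _ _ _ _ HG), E. reflexivity.
Qed.

Lemma g_inv_mul a b : inv (mul a b) = mul (inv b) (inv a).
Proof.
  apply (g_cancel_l (mul a b)). rewrite (grp_mulgV _ _ _ _ HG).
  rewrite <- (grp_assoc _ _ _ _ HG), (grp_assoc _ _ _ _ HG b), (grp_mulgV _ _ _ _ HG),
    (grp_mul1g _ _ _ _ HG), (grp_mulgV _ _ _ _ HG). reflexivity.
Qed.

Lemma g_mulK y s : mul (mul y (inv s)) s = y.
Proof. rewrite <- (grp_assoc _ _ _ _ HG), (grp_mulVg _ _ _ _ HG), (grp_mulg1 _ _ _ _ HG). reflexivity. Qed.

Lemma g_mulKV y s : mul (mul y s) (inv s) = y.
Proof. rewrite <- (grp_assoc _ _ _ _ HG), (grp_mulgV _ _ _ _ HG), (grp_mulg1 _ _ _ _ HG). reflexivity. Qed.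

Lemma g_invK a : inv (inv a) = a.
Proof.
  apply (g_cancel_l (inv a)). rewrite (grp_mulgV _ _ _ _ HG), (grp_mulVg _ _ _ _ HG). reflexivity.
Qed.
End GroupFacts.

Section Action.
Variables (G : Type) (mul : G -> G -> G) (one : G) (inv : G -> G).
Hypothesis HG : IsGroup G mul one inv.
Variable F : G -> Prop.
Hypothesis HF : IsSubgroup G mul one inv F.

Definition cosetP (y z : G) : Prop := exists f, F f /\ z = mul f y.
Definition fsig (y : G) : G := epsilon (inhabits one) (cosetP y).

Lemma sig_spec y : exists f, F f /\ fsig y = mul f y.
Proof.
  apply (epsilon_spec (inhabits one) (cosetP y)). exists y, one. split.
  apply (sub_one _ _ _ _ _ HF). rewrite (grp_mul1g _ _ _ _ HG). reflexivity.
Qed.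

Lemma sig_coset g y : F g -> fsig (mul g y) = fsig y.
Proof.
  intro Fg. unfold fsig. f_equal. apply functional_extensionality. intro z.
  apply propositional_extensionality. unfold cosetP. split.
  - intros [f [Ff ->]]. exists (mul f g). split. apply (sub_mul _ _ _ _ _ HF); auto.
    apply (grp_assoc _ _ _ _ HG).
  - intros [f [Ff ->]]. exists (mul f (inv g)). split.
    apply (sub_mul _ _ _ _ _ HF); auto. apply (sub_inv _ _ _ _ _ HF); auto.
    rewrite <- (grp_assoc _ _ _ _ HG), (grp_assoc _ _ _ _ HG (inv g)), (grp_mulVg _ _ _ _ HG),
      (grp_mul1g _ _ _ _ HG). reflexivity.
Qed.

Lemma sig_idem y : fsig (fsig y) = fsig y.
Proof. destruct (sig_spec y) as [f [Ff E]]. rewrite E at 1. apply sig_coset; auto. Qed.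

Lemma notF_mul g y : F g -> ~ F y -> ~ F (mul g y).
Proof.
  intros Fg Ny Fgy. apply Ny. replace y with (mul (inv g) (mul g y)).
  apply (sub_mul _ _ _ _ _ HF); auto. apply (sub_inv _ _ _ _ _ HF); auto.
  rewrite (grp_assoc _ _ _ _ HG), (grp_mulVg _ _ _ _ HG), (grp_mul1g _ _ _ _ HG). reflexivity.
Qed.

Lemma notF_mulr y g : F g -> ~ F y -> ~ F (mul y g).
Proof.
  intros Fg Ny Fgy. apply Ny. replace y with (mul (mul y g) (inv g)).
  apply (sub_mul _ _ _ _ _ HF); auto. apply (sub_inv _ _ _ _ _ HF); auto.
  apply (g_mulKV _ _ _ _ HG).
Qed.

Lemma sig_notF y : ~ F y -> ~ F (fsig y).
Proof. intro N. destruct (sig_spec y) as [f [Ff ->]]. apply notF_mul; auto. Qed.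

Lemma F_div_sig y : F (mul y (inv (fsig y))).
Proof.
  destruct (sig_spec y) as [f [Ff ->]]. rewrite (g_inv_mul _ _ _ _ HG), (grp_assoc _ _ _ _ HG),
    (grp_mulgV _ _ _ _ HG), (grp_mul1g _ _ _ _ HG). apply (sub_inv _ _ _ _ _ HF); auto.
Qed.

Definition state := (G * list (bool * G))%type.

Definition Fdec (y : G) : {F y} + {~ F y} := excluded_middle_informative (F y).

Definition absorb (b : bool) (y : G) (ts : list (bool * G)) : state :=
  if Fdec y then (y, ts) else (mul y (inv (fsig y)), (b, fsig y) :: ts).

Definition nact (b : bool) (x : G) (st : state) : state :=
  match st with
  | (f, (b', t) :: rest) => if Bool.eqb b b' then absorb b (mul x (mul f t)) rest
                            else absorb b (mul x f) ((b', t) :: rest)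
  | (f, []) => absorb b (mul x f) []
  end.

Definition hd_is (b : bool) (ts : list (bool * G)) : Prop :=
  match ts with (b', _) :: _ => b' = b | [] => False end.

Fixpoint alt (ts : list (bool * G)) : Prop :=
  match ts with
  | [] => True
  | p :: r => ~ hd_is (fst p) r /\ alt r
  end.

Definition goodt (p : bool * G) : Prop := fsig (snd p) = snd p /\ ~ F (snd p).

Definition valid (st : state) : Prop :=
  F (fst st) /\ alt (snd st) /\ List.Forall goodt (snd st).

Lemma nact_form b st : valid st ->
  exists Y ts0, alt ts0 /\ List.Forall goodt ts0 /\ ~ hd_is b ts0 /\
    forall x, nact b x st = absorb b (mul x Y) ts0.
Proof.
  destruct st as [f ts]. intros [Ff [Al Go]]. simpl in *. destruct ts as [|[b' t] rest].
  - exists f, []. simpl. repeat split; auto.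
  - destruct (Bool.bool_dec b b') as [<-|ne].
    + exists (mul f t), rest. simpl in Al. inversion Go; subst. destruct Al as [A1 A2].
      repeat split; auto. intro x. simpl. rewrite Bool.eqb_reflx. reflexivity.
    + exists f, ((b',t)::rest). split; [auto|split; [auto|split]].
      simpl. intro; congruence.
      intro x. simpl. destruct b, b'; simpl; congruence.
Qed.

Lemma nact_absorb b a y ts : ~ hd_is b ts -> nact b a (absorb b y ts) = absorb b (mul a y) ts.
Proof.
  intro Nh. unfold absorb at 1. destruct (Fdec y).
  - destruct ts as [|[b' t] r]; simpl; auto.
    simpl in Nh. destruct b, b'; simpl; congruence.
  - simpl. rewrite Bool.eqb_reflx. rewrite (g_mulK _ _ _ _ HG). reflexivity.
Qed.

Lemma absorb_valid b y ts : alt ts -> List.Forall goodt ts -> ~ hd_is b ts -> valid (absorb b y ts).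
Proof.
  intros Al Go Nh. unfold absorb. destruct (Fdec y) as [Fy|Ny].
  - repeat split; auto.
  - repeat split; simpl; auto. apply F_div_sig. constructor; auto. split; simpl.
    apply sig_idem. apply sig_notF; auto.
Qed.

Lemma nact_valid b x st : valid st -> valid (nact b x st).
Proof.
  intro V. destruct (nact_form b st V) as [Y [ts0 [A [Go [Nh E]]]]]. rewrite E.
  apply absorb_valid; auto.
Qed.

Lemma nact_comp b a c st : valid st -> nact b a (nact b c st) = nact b (mul a c) st.
Proof.
  intro V. destruct (nact_form b st V) as [Y [ts0 [A [Go [Nh E]]]]]. rewrite !E.
  rewrite nact_absorb; auto. rewrite (grp_assoc _ _ _ _ HG). reflexivity.
Qed.

Lemma nact_one b st : valid st -> nact b one st = st.
Proof.
  destruct st as [f ts]. intros [Ff [Al Go]]. simpl in *. destruct ts as [|[b' t] rest].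
  - unfold nact, absorb. rewrite (grp_mul1g _ _ _ _ HG). destruct (Fdec f); tauto.
  - inversion Go as [|? ? [St Nt] Go']; subst. simpl in St, Nt.
    unfold nact. destruct (Bool.eqb b b') eqn:Eb.
    + apply Bool.eqb_prop in Eb. subst. rewrite (grp_mul1g _ _ _ _ HG). unfold absorb.
      destruct (Fdec (mul f t)) as [Fy|Ny].
      * exfalso. apply (notF_mul f t Ff Nt Fy).
      * rewrite sig_coset, St; auto. rewrite (g_mulKV _ _ _ _ HG). reflexivity.
    + rewrite (grp_mul1g _ _ _ _ HG). unfold absorb. destruct (Fdec f); tauto.
Qed.

Lemma nact_F_same b g f t rest : F g -> valid (f, (b, t) :: rest) ->
  nact b g (f, (b, t) :: rest) = (mul g f, (b, t) :: rest).
Proof.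
  intros Fg [Ff [Al Go]]. inversion Go as [|? ? [St Nt] Go']; subst. simpl in *.
  rewrite Bool.eqb_reflx. unfold absorb. destruct (Fdec (mul g (mul f t))) as [Fy|Ny].
  - exfalso. apply (notF_mul (mul g f) t). apply (sub_mul _ _ _ _ _ HF); auto. auto.
    rewrite <- (grp_assoc _ _ _ _ HG). auto.
  - rewrite (grp_assoc _ _ _ _ HG), sig_coset, St. rewrite (g_mulKV _ _ _ _ HG). reflexivity.
    apply (sub_mul _ _ _ _ _ HF); auto.
Qed.

Lemma nact_F_other b b' g f t rest : F g -> F f -> b <> b' ->
  nact b g (f, (b', t) :: rest) = (mul g f, (b', t) :: rest).
Proof.
  intros Fg Ff ne. simpl. replace (Bool.eqb b b') with false by (destruct b, b'; simpl; congruence).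
  unfold absorb. destruct (Fdec (mul g f)) as [_|N]; auto. exfalso. apply N.
  apply (sub_mul _ _ _ _ _ HF); auto.
Qed.

Lemma nact_F g st : F g -> valid st -> nact true g st = nact false g st.
Proof.
  intros Fg V. destruct st as [f ts]. assert (Ff : F f) by apply V.
  destruct ts as [|[b' t] rest].
  - simpl. unfold absorb. destruct (Fdec (mul g f)) as [|N]; auto.
    exfalso; apply N; apply (sub_mul _ _ _ _ _ HF); auto.
  - destruct b'.
    + rewrite nact_F_same, nact_F_other; auto; congruence.
    + rewrite nact_F_same, nact_F_other; auto; congruence.
Qed.

Definition act_letter (a : G + G) (st : state) : state :=
  match a with inl x => nact true x st | inr x => nact false x st end.

Definition actw (w : list (G + G)) (st : state) : state := fold_right act_letter st w.

Lemma actw_valid w st : valid st -> valid (actw w st).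
Proof.
  induction w as [|a w IH]; simpl; auto. intro V. destruct a; apply nact_valid; auto.
Qed.

Lemma actw_app u v st : actw (u ++ v) st = actw u (actw v st).
Proof. unfold actw. apply fold_right_app. Qed.

Lemma amal_eq_act (H K : G -> Prop) w1 w2 : amal_eq G mul one H K F w1 w2 ->
  forall st, valid st -> actw w1 st = actw w2 st.
Proof.
  induction 1 as [u v w w' R| | |]; intros st V.
  - rewrite !actw_app. f_equal. assert (V' := actw_valid v st V).
    destruct R; simpl.
    + apply nact_comp; auto.
    + apply nact_comp; auto.
    + apply nact_F; auto.
    + apply nact_one; auto.
    + apply nact_one; auto.
  - reflexivity.
  - symmetry; auto.
  - rewrite IHamal_eq1; auto.
Qed.


Variables (H K : G -> Prop) (k : G).
Hypothesis knF : ~ F k.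

Definition word (hs : list G) : list (G + G) := flat_map (fun h => [inl h; inr k]) hs.
Definition Sst (hs : list G) : state := actw (word hs) (one, []).

Lemma S_cons h r : Sst (h :: r) = nact true h (nact false k (Sst r)).
Proof. reflexivity. Qed.

Lemma step st h : valid st -> ~ hd_is false (snd st) -> ~ F h ->
  exists f1 f' rest0, F f1 /\ nact true h (nact false k st) = (f', (true, fsig (mul h f1)) :: rest0).
Proof.
  destruct st as [f ts]. intros V Nh Nf. assert (Ff : F f) by apply V. simpl in Nh.
  assert (E1 : nact false k (f, ts) = absorb false (mul k f) ts).
  { destruct ts as [|[b' t] r]; simpl; auto. simpl in Nh. destruct b'; simpl; tauto. }
  rewrite E1. unfold absorb at 1. destruct (Fdec (mul k f)) as [Fkf|Nkf].
  { exfalso. apply (notF_mulr k f Ff knF Fkf). }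
  set (f1 := mul (mul k f) (inv (fsig (mul k f)))).
  assert (Ff1 : F f1) by apply F_div_sig.
  exists f1. simpl. unfold absorb. destruct (Fdec (mul h f1)) as [Fh|Nh1].
  { exfalso. apply (notF_mulr h f1 Ff1 Nf Fh). }
  eexists; eexists; split; [exact Ff1|reflexivity].
Qed.

Lemma S_props hs : List.Forall (fun h => ~ F h) hs -> valid (Sst hs) /\ ~ hd_is false (snd (Sst hs)).
Proof.
  induction hs as [|h r IH]; intro A.
  - split. repeat split; simpl; auto. apply (sub_one _ _ _ _ _ HF). simpl. auto.
  - inversion A; subst. destruct (IH H3) as [V N]. split.
    + rewrite S_cons. apply nact_valid, nact_valid; auto.
    + rewrite S_cons. destruct (step _ h V N H2) as [f1 [f' [r0 [_ ->]]]]. simpl. discriminate.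
Qed.

Definition dc (x y : G) : Prop := exists a b, F a /\ F b /\ y = mul a (mul x b).

Hypothesis Hk : K k.
Hypothesis Inj : amalgam_injective G mul one H K F.

Lemma word_ok hs : List.Forall H hs -> amal_word_ok G H K (word hs).
Proof.
  induction hs as [|h r IH]; intros A a Ia; simpl in Ia; [tauto|].
  inversion A; subst. destruct Ia as [<-|[<-|Ia]]; auto. apply IH; auto.
Qed.

Lemma eval_cons h r : amal_eval G mul one (word (h :: r)) = mul h (mul k (amal_eval G mul one (word r))).
Proof. reflexivity. Qed.

Lemma key h r h' r' :
  List.Forall (fun x => H x /\ ~ F x) (h :: r) -> List.Forall (fun x => H x /\ ~ F x) (h' :: r') ->
  amal_eval G mul one (word (h :: r)) = amal_eval G mul one (word (h' :: r')) -> dc h h'.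
Proof.
  intros A A' E.
  assert (AH : forall l, List.Forall (fun x => H x /\ ~ F x) l -> List.Forall H l).
  { intros l; apply Forall_impl; tauto. }
  assert (AF : forall l, List.Forall (fun x => H x /\ ~ F x) l -> List.Forall (fun x => ~ F x) l).
  { intros l; apply Forall_impl; tauto. }
  assert (Eq := Inj _ _ (word_ok _ (AH _ A)) (word_ok _ (AH _ A')) E).
  assert (V0 : valid (one, [])). { repeat split; simpl; auto. apply (sub_one _ _ _ _ _ HF). }
  assert (ES := amal_eq_act H K _ _ Eq _ V0). fold (Sst (h :: r)) (Sst (h' :: r')) in ES.
  inversion A; inversion A'; subst.
  destruct (S_props r (AF _ H3)) as [V N]. destruct (S_props r' (AF _ H7)) as [V' N'].
  rewrite !S_cons in ES.
  destruct (step _ h V N (proj2 H2)) as [f1 [g1 [r1 [Ff1 E1]]]].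
  destruct (step _ h' V' N' (proj2 H6)) as [f2 [g2 [r2 [Ff2 E2]]]].
  rewrite E1, E2 in ES. injection ES as _ Es _.
  destruct (sig_spec (mul h f1)) as [a [Fa Ea]]. destruct (sig_spec (mul h' f2)) as [b [Fb Eb]].
  rewrite Ea, Eb in Es.
  exists (mul (inv b) a), (mul f1 (inv f2)). split; [|split].
  - apply (sub_mul _ _ _ _ _ HF); auto. apply (sub_inv _ _ _ _ _ HF); auto.
  - apply (sub_mul _ _ _ _ _ HF); auto. apply (sub_inv _ _ _ _ _ HF); auto.
  - assert (X : mul h' f2 = mul (mul (inv b) a) (mul h f1)).
    { apply (g_cancel_l _ _ _ _ HG b). rewrite <- Es, !(grp_assoc _ _ _ _ HG),
        (grp_mulgV _ _ _ _ HG), (grp_mul1g _ _ _ _ HG). reflexivity. }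
    rewrite <- (g_mulKV _ _ _ _ HG h' f2), X, <- !(grp_assoc _ _ _ _ HG). reflexivity.
Qed.

Lemma inj_seq (L : list G) :
  (forall x y, In x L -> In y L -> dc x y -> x = y) ->
  forall hs hs', length hs = length hs' ->
  List.Forall (fun x => H x /\ ~ F x /\ In x L) hs -> List.Forall (fun x => H x /\ ~ F x /\ In x L) hs' ->
  amal_eval G mul one (word hs) = amal_eval G mul one (word hs') -> hs = hs'.
Proof.
  intros PL. induction hs as [|h r IH]; intros [|h' r'] Len A A' E; simpl in Len; try discriminate; auto.
  inversion A; inversion A'; subst.
  assert (D : dc h h').
  { apply (key h r h' r'); auto.
    - constructor. tauto. eapply Forall_impl; [|exact H3]. tauto.
    - constructor. tauto. eapply Forall_impl; [|exact H7]. tauto. }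
  assert (h = h') by (apply PL; tauto). subst h'. f_equal.
  apply IH; auto. rewrite !eval_cons in E. apply (g_cancel_l _ _ _ _ HG) in E.
  apply (g_cancel_l _ _ _ _ HG) in E. exact E.
Qed.

End Action.

Open Scope R_scope.

Lemma exp_le x y : x <= y -> exp x <= exp y.
Proof. intro H. destruct (Rle_lt_or_eq_dec _ _ H) as [h| ->]. left; apply exp_increasing; auto. lra. Qed.

Lemma nat_above x : exists N : nat, x <= INR N.
Proof.
  destruct (archimed x) as [H1 _]. destruct (Z_le_gt_dec (up x) 0) as [h|h].
  - exists 0%nat. simpl. apply IZR_le in h. lra.
  - exists (Z.to_nat (up x)). rewrite INR_IZR_INZ, Z2Nat.id by lia. lra.
Qed.

Lemma pow_exp x n : exp x ^ n = exp (INR n * x).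
Proof.
  induction n as [|n IH]. simpl. rewrite Rmult_0_l, exp_0. reflexivity.
  rewrite S_INR. simpl pow. rewrite IH, <- exp_plus. f_equal. ring.
Qed.

Definition lsum {G : Type} (w : G -> R) (l : list G) : R := fold_right (fun h acc => w h + acc) 0 l.

Lemma lsum_filter {G : Type} (w : G -> R) (p : G -> bool) l :
  lsum w l = lsum w (filter p l) + lsum w (filter (fun x => negb (p x)) l).
Proof. induction l as [|a l IH]; simpl. lra. destruct (p a); simpl; rewrite IH; lra. Qed.

Lemma lsum_le_len {G : Type} (w : G -> R) c l : (forall h, In h l -> w h <= c) -> lsum w l <= INR (length l) * c.
Proof.
  induction l as [|a l IH]; intro Hb. simpl; lra. change (lsum w (a::l)) with (w a + lsum w l).
  change (length (a::l)) with (S (length l)). rewrite S_INR.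
  assert (w a <= c) by (apply Hb; left; auto). assert (lsum w l <= INR (length l) * c) by (apply IH; intros; apply Hb; right; auto).
  lra.
Qed.

Lemma lsum_ge0 {G : Type} (w : G -> R) l : (forall h, 0 <= w h) -> 0 <= lsum w l.
Proof. intro P. induction l; simpl. lra. specialize (P a). lra. Qed.

Lemma lsum_mono {G : Type} (w w' : G -> R) l : (forall h, In h l -> w h <= w' h) -> lsum w l <= lsum w' l.
Proof.
  induction l as [|a l IH]; intro Hb; simpl. lra.
  assert (w a <= w' a) by (apply Hb; left; auto). assert (lsum w l <= lsum w' l) by (apply IH; intros; apply Hb; right; auto). lra.
Qed.

Lemma lsum_app {G : Type} (w : G -> R) l1 l2 : lsum w (l1 ++ l2) = lsum w l1 + lsum w l2.
Proof. induction l1; simpl. lra. rewrite IHl1. lra. Qed.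

Lemma lsum_scal {G : Type} (w : G -> R) c l : lsum (fun x => c * w x) l = c * lsum w l.
Proof. induction l; simpl. lra. rewrite IHl. lra. Qed.

Lemma card_exists {G : Type} (P : G -> Prop) : finite_set P -> exists n, has_card P n.
Proof.
  intros [l Hl].
  assert (dec : forall x y : G, {x = y} + {x <> y}) by (intros; apply excluded_middle_informative).
  set (pb := fun x => if excluded_middle_informative (P x) then true else false).
  exists (length (nodup dec (filter pb l))). exists (nodup dec (filter pb l)).
  split; [apply NoDup_nodup|split; auto]. intro x. rewrite nodup_In, filter_In. unfold pb.
  destruct (excluded_middle_informative (P x)) as [p|np]; split.
  - intro Px; split; [apply Hl; auto|reflexivity]. - intros; auto.
  - intro; contradiction. - intros [_ E]; discriminate.
Qed.

Section Analysis.
Variables (G : Type) (mul : G -> G -> G) (one : G) (inv : G -> G).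
Hypothesis HG : IsGroup G mul one inv.
Variables (X : Type) (d : X -> X -> R).
Hypothesis Hd : IsMetric X d.
Variable (actX : G -> X -> X).
Hypothesis Hact : IsIsometricAction G mul one X d actX.
Hypothesis Hprop : ProperAction G X d actX.
Variable o : X.

Definition Dd (h : G) : R := d o (actX h o).
Definition wt (s : R) (h : G) : R := exp (- s * Dd h).

Lemma Dd_ge0 h : 0 <= Dd h.
Proof. apply (met_ge0 _ _ Hd). Qed.

Lemma Dd_one : Dd one = 0.
Proof. unfold Dd. rewrite (act_one _ _ _ _ _ _ Hact). apply (met_eq0 _ _ Hd). auto. Qed.

Lemma Dd_mul a b : Dd (mul a b) <= Dd a + Dd b.
Proof.
  unfold Dd. rewrite (act_mul _ _ _ _ _ _ Hact). eapply Rle_trans. apply (met_tri _ _ Hd) with (y := actX a o).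
  rewrite (act_isom _ _ _ _ _ _ Hact). lra.
Qed.

Lemma Dd_inv a : Dd (inv a) = Dd a.
Proof.
  unfold Dd. rewrite <- (act_isom _ _ _ _ _ _ Hact a), <- (act_mul _ _ _ _ _ _ Hact),
    (grp_mulgV _ _ _ _ HG), (act_one _ _ _ _ _ _ Hact). apply (met_sym _ _ Hd).
Qed.

Lemma wt_le1 s h : 0 <= s -> wt s h <= 1.
Proof. intro s0. unfold wt. rewrite <- exp_0. apply exp_le. pose proof (Dd_ge0 h). nra. Qed.

Lemma wt_pos s h : 0 < wt s h.
Proof. apply exp_pos. Qed.

Lemma ball_fin (P : G -> Prop) r : 0 <= r -> finite_set (fun g => ballG G X d actX o r g /\ P g).
Proof. intro r0. destruct (Hprop o r r0) as [l Hl]. exists l. intros x [Hx _]. auto. Qed.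

Lemma crit_ge (P : G -> Prop) (s : R) : 0 <= s -> poincare_diverges G X d actX o P s ->
  Rbar_le (Finite s) (crit_exp G X d actX o P).
Proof.
  intros s0 Div. destruct (Rbar_le_lt_dec s (crit_exp G X d actX o P)) as [ok|lt]; auto. exfalso.
  set (E := fun z => exists M : R, z = growth_tail G X d actX o P M) in lt.
  assert (HE := proj2_sig (Rbar_ex_glb E)).
  assert (ExM : exists M, Rbar_lt (growth_tail G X d actX o P M) s).
  { apply NNPP. intro NE. apply (Rbar_lt_not_le _ _ lt). apply (proj2 HE).
    intros z [M ->]. apply Rbar_not_lt_le. intro L. apply NE. exists M. auto. }
  destruct ExM as [M LtM].
  set (R0 := Rmax M 1).
  assert (R0ge : M <= R0 /\ 1 <= R0) by (split; [apply Rmax_l|apply Rmax_r]).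
  set (EM := fun y => exists r n, M <= r /\ 0 < r /\
             has_card (fun g => ballG G X d actX o r g /\ P g) n /\ y = ln (INR n) / r).
  assert (HL := Lub_Rbar_correct EM).
  assert (inEM : forall r n, M <= r -> 0 < r -> has_card (fun g => ballG G X d actX o r g /\ P g) n ->
     Rbar_le (ln (INR n) / r) (growth_tail G X d actX o P M)).
  { intros r n a b c. apply (proj1 HL). exists r, n. auto. }
  destruct (card_exists _ (ball_fin P R0 ltac:(lra))) as [n0 Hn0].
  assert (I0 := inEM R0 n0 (proj1 R0ge) ltac:(lra) Hn0).
  destruct (growth_tail G X d actX o P M) as [t0| |] eqn:Egt; simpl in LtM, I0; try tauto.
  assert (Cnt : forall r, R0 <= r -> forall l', NoDup l' -> (forall h, In h l' -> Dd h <= r /\ P h) ->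
             INR (length l') <= exp (t0 * r)).
  { intros r Hr l' ND Hl'. destruct (card_exists _ (ball_fin P r ltac:(lra))) as [n Hn].
    assert (In1 := inEM r n ltac:(lra) ltac:(lra) Hn). simpl in In1.
    destruct Hn as [lc [NDc [Ec Lc]]].
    assert (Le : (length l' <= n)%nat).
    { rewrite <- Lc. apply NoDup_incl_length; auto. intros h Ih. apply Ec.
      destruct (Hl' h Ih). split; auto. }
    apply le_INR in Le. destruct n as [|n].
    - simpl in Le. pose proof (exp_pos (t0 * r)). lra.
    - assert (0 < INR (S n)) by (apply lt_0_INR; lia).
      assert (ln (INR (S n)) <= t0 * r).
      { apply Rle_div_l in In1; lra. }
      eapply Rle_trans. exact Le. rewrite <- (exp_ln (INR (S n))) by auto. apply exp_le. auto. }
  set (rho := exp (t0 - s)).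
  assert (rho1 : rho < 1) by (unfold rho; rewrite <- exp_0; apply exp_increasing; lra).
  assert (rho0 : 0 < rho) by apply exp_pos.
  set (Bnd := fun N : nat => exp (t0 * R0) + exp s * (rho - rho ^ (S N)) / (1 - rho)).
  assert (Ind : forall N l, NoDup l -> (forall h, In h l -> P h /\ Dd h <= R0 + INR N) ->
             lsum (wt s) l <= Bnd N).
  { induction N as [|N IH]; intros l ND Hl.
    - unfold Bnd. simpl pow. replace (rho - rho * 1) with 0 by ring.
      eapply Rle_trans. apply lsum_le_len with (c := 1). intros; apply wt_le1; auto.
      assert (INR (length l) <= exp (t0 * R0)).
      { apply Cnt; auto. lra. intros h Ih. destruct (Hl h Ih). simpl in *. split; auto; lra. }
      replace (exp s * 0 / (1 - rho)) with 0 by (field; lra). lra.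
    - set (p := fun h => if Rle_dec (Dd h) (R0 + INR N) then true else false).
      rewrite (lsum_filter _ p).
      assert (A1 : lsum (wt s) (filter p l) <= Bnd N).
      { apply IH. apply NoDup_filter; auto. intros h Ih. apply filter_In in Ih. destruct Ih as [Ih Ph].
        unfold p in Ph. destruct (Rle_dec (Dd h) (R0 + INR N)); try discriminate. split; auto. apply Hl; auto. }
      assert (A2 : lsum (wt s) (filter (fun x => negb (p x)) l) <= exp (t0 * (R0 + INR (S N))) * exp (- s * (R0 + INR N))).
      { eapply Rle_trans. apply lsum_le_len with (c := exp (- s * (R0 + INR N))).
        - intros h Ih. apply filter_In in Ih. destruct Ih as [Ih Ph]. unfold p in Ph.
          destruct (Rle_dec (Dd h) (R0 + INR N)) as [|nle]; try discriminate. unfold wt. apply exp_le.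
          apply Rnot_le_lt in nle. nra.
        - apply Rmult_le_compat_r. left; apply exp_pos. apply Cnt. rewrite S_INR. pose proof (pos_INR N). lra.
          apply NoDup_filter; auto. intros h Ih. apply filter_In in Ih. destruct Ih as [Ih _]. destruct (Hl h Ih). auto. }
      assert (A3 : exp (t0 * (R0 + INR (S N))) * exp (- s * (R0 + INR N)) <= exp s * rho ^ (S N)).
      { unfold rho. rewrite pow_exp, <- !exp_plus. apply exp_le. rewrite !S_INR.
        assert (0 <= R0) by lra. nra. }
      assert (A4 : Bnd N + exp s * rho ^ (S N) = Bnd (S N)).
      { unfold Bnd. simpl pow. field. lra. }
      lra. }
  set (B := exp (t0 * R0) + exp s * rho / (1 - rho)).
  destruct (Div B) as [l [ND [Pl Sl]]].
  assert (ExN : exists N : nat, forall h, In h l -> Dd h <= R0 + INR N).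
  { clear Sl ND. induction l as [|a l IHl].
    - exists 0%nat. intros h [].
    - destruct IHl as [N1 HN1]. intros; apply Pl; right; auto.
      destruct (nat_above (Dd a)) as [N2 HN2]. exists (Nat.max N1 N2). intros h [<-|Ih].
      + assert (INR N2 <= INR (Nat.max N1 N2)) by (apply le_INR; lia). lra.
      + assert (INR N1 <= INR (Nat.max N1 N2)) by (apply le_INR; lia). specialize (HN1 h Ih). lra. }
  destruct ExN as [N HN].
  assert (Le := Ind N l ND (fun h Ih => conj (Pl h Ih) (HN h Ih))).
  assert (Bnd N <= B).
  { unfold Bnd, B. assert (0 <= rho ^ (S N)) by (apply pow_le; lra).
    assert (0 < exp s) by apply exp_pos. apply Rplus_le_compat_l.
    unfold Rdiv. apply Rmult_le_compat_r. left; apply Rinv_0_lt_compat; lra. nra. }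
  change (fold_right (fun h acc => exp (- s * d o (actX h o)) + acc) 0 l) with (lsum (wt s) l) in Sl.
  lra.
Qed.

Lemma crit_nonneg (P : G -> Prop) : P one -> Rbar_le (Finite 0) (crit_exp G X d actX o P).
Proof.
  intro P1. unfold crit_exp. apply (proj2 (proj2_sig (Rbar_ex_glb _))).
  intros z [M ->]. unfold growth_tail.
  set (R0 := Rmax M 1).
  assert (R0ge : M <= R0 /\ 1 <= R0) by (split; [apply Rmax_l|apply Rmax_r]).
  destruct (card_exists _ (ball_fin P R0 ltac:(lra))) as [n0 Hn0].
  eapply Rbar_le_trans; [|apply (proj1 (Lub_Rbar_correct _)); exists R0, n0; repeat split; eauto; lra].
  simpl. destruct Hn0 as [lc [ND [Ec Lc]]].
  assert (In one lc). { apply Ec. split; auto. unfold ballG. fold (Dd one). rewrite Dd_one. lra. }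
  destruct lc as [|a lc]. destruct H. simpl in Lc. subst n0.
  assert (1 <= INR (S (length lc))) by (rewrite S_INR; pose proof (pos_INR (length lc)); lra).
  assert (0 <= ln (INR (S (length lc)))) by (rewrite <- ln_1; apply ln_le; lra).
  apply Rmult_le_pos; auto. left; apply Rinv_0_lt_compat; lra.
Qed.

End Analysis.

Lemma select {T : Type} (Rl : T -> T -> Prop) (w : T -> R) (m : nat) (C : R) :
  (forall x, Rl x x) -> (forall x y, Rl x y -> Rl y x) ->
  (forall x A, NoDup A -> (forall y, In y A -> Rl x y) -> (length A <= m)%nat) ->
  (forall x y, Rl x y -> w y <= C * w x) -> (forall x, 0 <= w x) ->
  forall l, NoDup l -> exists L, NoDup L /\ incl L l /\
    (forall x y, In x L -> In y L -> Rl x y -> x = y) /\ lsum w l <= INR m * C * lsum w L.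
Proof.
  intros Rr Rs Mb Cw W0.
  assert (Main : forall n l, (length l <= n)%nat -> NoDup l -> exists L, NoDup L /\ incl L l /\
    (forall x y, In x L -> In y L -> Rl x y -> x = y) /\ lsum w l <= INR m * C * lsum w L).
  { induction n as [|n IH]; intros l Len ND.
    - destruct l; simpl in Len; [|lia]. exists []. split; [constructor|split; [intros ? []|split; [intros ? ? []|simpl; lra]]].
    - destruct l as [|x l'].
      { exists []. split; [constructor|split; [intros ? []|split; [intros ? ? []|simpl; lra]]]. }
      set (p := fun y => if excluded_middle_informative (Rl x y) then true else false).
      inversion ND as [|? ? Nx ND']; subst.
      assert (Lr : (length (filter (fun y => negb (p y)) l') <= n)%nat).
      { simpl in Len. pose proof (filter_length_le (fun y => negb (p y)) l'). lia. }
      destruct (IH _ Lr (NoDup_filter _ ND')) as [L' [NDL' [IL' [PL' SL']]]].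
      assert (notR : forall y, In y L' -> ~ Rl x y).
      { intros y Iy Ry. apply IL' in Iy. apply filter_In in Iy. destruct Iy as [_ Py].
        unfold p in Py. destruct (excluded_middle_informative (Rl x y)); simpl in Py; congruence. }
      exists (x :: L'). split; [|split; [|split]].
      + constructor; auto. intro I. apply (notR x I (Rr x)).
      + intros y [<-|Iy]. left; auto. right. apply IL' in Iy. apply filter_In in Iy. tauto.
      + intros a b [<-|Ia] [<-|Ib] Rab; auto.
        * exfalso. apply (notR b Ib Rab).
        * exfalso. apply (notR a Ia (Rs _ _ Rab)).
      + change (lsum w (x :: l')) with (w x + lsum w l'). rewrite (lsum_filter w p l').
        change (lsum w (x :: L')) with (w x + lsum w L').
        assert (A1 : w x + lsum w (filter p l') <= INR m * C * w x).
        { change (w x + lsum w (filter p l')) with (lsum w (x :: filter p l')).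
          eapply Rle_trans. apply lsum_le_len with (c := C * w x).
          - intros y [<-|Iy]. apply Cw; auto. apply filter_In in Iy. destruct Iy as [_ Py].
            unfold p in Py. destruct (excluded_middle_informative (Rl x y)); try discriminate. apply Cw; auto.
          - assert (Le : (length (x :: filter p l') <= m)%nat).
            { apply Mb with (x := x). constructor. intro I. apply filter_In in I. tauto.
              apply NoDup_filter; auto. intros y [<-|Iy]; auto. apply filter_In in Iy. destruct Iy as [_ Py].
              unfold p in Py. destruct (excluded_middle_informative (Rl x y)); try discriminate; auto. }
            apply le_INR in Le. assert (0 <= C * w x).
            { pose proof (W0 x). pose proof (Cw x x (Rr x)). lra. }
            rewrite Rmult_assoc. apply Rmult_le_compat_r; auto. }
        lra. }
  intros l ND. apply (Main (length l)); auto.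
Qed.

Fixpoint seqs {T : Type} (L : list T) (n : nat) : list (list T) :=
  match n with
  | O => [[]]
  | S n => flat_map (fun h => map (cons h) (seqs L n)) L
  end.

Definition prodw {T : Type} (u : T -> R) (hs : list T) : R := fold_right (fun h acc => u h * acc) 1 hs.

Lemma lsum_flat_map {A B : Type} (w : B -> R) (f : A -> list B) l :
  lsum w (flat_map f l) = lsum (fun a => lsum w (f a)) l.
Proof. induction l; simpl. auto. rewrite lsum_app, IHl. reflexivity. Qed.

Lemma lsum_map {A B : Type} (w : B -> R) (f : A -> B) l : lsum w (map f l) = lsum (fun a => w (f a)) l.
Proof. induction l; simpl; auto. rewrite IHl. auto. Qed.

Lemma lsum_ext {A : Type} (w w' : A -> R) l : (forall x, w x = w' x) -> lsum w l = lsum w' l.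
Proof. intro E. induction l; simpl; auto. rewrite IHl, E. auto. Qed.

Lemma seqs_sum {T : Type} (u : T -> R) L n : lsum (prodw u) (seqs L n) = (lsum u L) ^ n.
Proof.
  induction n as [|n IH]. simpl. ring.
  simpl seqs. rewrite lsum_flat_map. simpl pow. rewrite <- IH, Rmult_comm, <- lsum_scal.
  apply lsum_ext. intro h. rewrite lsum_map.
  rewrite (lsum_ext _ (fun x => u h * prodw u x)) by reflexivity. rewrite lsum_scal. ring.
Qed.

Lemma seqs_in {T : Type} (L : list T) n hs : In hs (seqs L n) -> length hs = n /\ List.Forall (fun x => In x L) hs.
Proof.
  revert hs. induction n as [|n IH]; intros hs I.
  - simpl in I. destruct I as [<-|[]]. split; auto.
  - simpl in I. apply in_flat_map in I. destruct I as [h [Ih I]]. apply in_map_iff in I.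
    destruct I as [r [<- Ir]]. destruct (IH r Ir). split. simpl; auto. constructor; auto.
Qed.

Lemma nodup_flat_map {A B : Type} (f : A -> list B) l : NoDup l -> (forall a, In a l -> NoDup (f a)) ->
  (forall a a' x, In x (f a) -> In x (f a') -> a = a') -> NoDup (flat_map f l).
Proof.
  intros ND Hf Hd. induction l as [|a l IH]; simpl. constructor.
  inversion ND; subst. apply NoDup_app.
  - apply Hf; left; auto.
  - apply IH; auto. intros; apply Hf; right; auto.
  - intros x Ix Ix'. apply in_flat_map in Ix'. destruct Ix' as [a' [Ia' Ix']].
    assert (a = a') by (apply (Hd a a' x); auto). subst. contradiction.
Qed.

Lemma seqs_nodup {T : Type} (L : list T) n : NoDup L -> NoDup (seqs L n).
Proof.
  intro ND. induction n as [|n IH].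
  - simpl. constructor. intros []. constructor.
  - simpl. apply nodup_flat_map; auto.
    + intros a _. apply NoDup_map_NoDup_ForallPairs; auto. intros x y _ _ E. injection E; auto.
    + intros a a' x I I'. apply in_map_iff in I, I'. destruct I as [r [<- _]]. destruct I' as [r' [E _]].
      injection E; auto.
Qed.

Lemma bernoulli q n : 1 <= q -> 1 + INR n * (q - 1) <= q ^ n.
Proof.
  intro q1. induction n as [|n IH]. simpl. lra.
  rewrite S_INR. simpl pow. assert (0 <= INR n) by apply pos_INR.
  assert (q * (1 + INR n * (q - 1)) <= q * q ^ n) by (apply Rmult_le_compat_l; lra).
  assert (0 <= INR n * ((q - 1) * (q - 1))) by (apply Rmult_le_pos; nra). nra.
Qed.

Lemma bound_list {T : Type} (f : T -> R) l : exists D, 0 <= D /\ forall x, In x l -> f x <= D.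
Proof.
  induction l as [|a l [D [D0 HD]]]. exists 0. split. lra. intros _ [].
  exists (Rmax D (f a)). split. eapply Rle_trans; [exact D0|apply Rmax_l].
  intros x [<-|Ix]. apply Rmax_r. eapply Rle_trans; [apply HD; auto|apply Rmax_l].
Qed.

Lemma wt_word (G : Type) (mul : G -> G -> G) (one : G) (X : Type) (d : X -> X -> R)
  (Hd : IsMetric X d) (actX : G -> X -> X) (Hact : IsIsometricAction G mul one X d actX) (o : X)
  (k : G) (s : R) (s0 : 0 <= s) hs :
  prodw (fun h => wt G X d actX o s h * exp (- s * Dd G X d actX o k)) hs <=
  wt G X d actX o s (amal_eval G mul one (word G k hs)).
Proof.
  induction hs as [|h r IH].
  - simpl. unfold wt. rewrite (Dd_one G mul one X d Hd actX Hact o). rewrite Rmult_0_r, exp_0. lra.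
  - rewrite eval_cons. simpl prodw.
    set (g := amal_eval G mul one (word G k r)) in *.
    assert (D1 := Dd_mul G mul one X d Hd actX Hact o h (mul k g)).
    assert (D2 := Dd_mul G mul one X d Hd actX Hact o k g).
    unfold wt in *. rewrite <- !exp_plus.
    assert (0 <= exp (- s * Dd G X d actX o h + - s * Dd G X d actX o k)) by (left; apply exp_pos).
    eapply Rle_trans. apply Rmult_le_compat_l. exact H. exact IH.
    rewrite <- exp_plus. apply exp_le. nra.
Qed.

Theorem mainTheorem6
  (G : Type) (mul : G -> G -> G) (one : G) (inv : G -> G)
  (HG : IsGroup G mul one inv)
  (X : Type) (d : X -> X -> R) (Hd : IsMetric X d)
  (act : G -> X -> X) (Hact : IsIsometricAction G mul one X d act)
  (Hprop : ProperAction G X d act)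
  (o : X)
  (H : G -> Prop) (HH : IsSubgroup G mul one inv H)
  (HI : Rbar_lt (crit_exp G X d act o H) p_infty)
  (HII : divergent_subgroup G X d act o H)
  (HIII : exists K F : G -> Prop,
      IsSubgroup G mul one inv K /\ IsSubgroup G mul one inv F /\
      (forall f, F f -> H f /\ K f) /\
      finite_set F /\ (exists k, K k /\ ~ F k) /\
      amalgam_injective G mul one H K F) :
  Rbar_lt (crit_exp G X d act o H) (crit_exp G X d act o (fun _ => True)).
Proof.
  destruct HIII as [K [F [HK [HF [FHK [[lF HlF] [[k [Kk nFk]] Inj]]]]]]].
  assert (H1 : H one) by apply (sub_one _ _ _ _ _ HH).
  assert (Cn := crit_nonneg G mul one X d Hd act Hact Hprop o H H1).
  unfold divergent_subgroup in HII.
  destruct (crit_exp G X d act o H) as [om| |] eqn:Eom; simpl in HI, Cn, HII; try tauto.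
  set (Dd' := Dd G X d act o).
  set (w := wt G X d act o).
  assert (Dd0 : forall h, 0 <= Dd' h) by (intro; apply (Dd_ge0 G X d Hd)).
  set (m0 := length lF).
  assert (m01 : (1 <= m0)%nat).
  { unfold m0. destruct lF. destruct (HlF one (sub_one _ _ _ _ _ HF)). simpl; lia. }
  destruct (bound_list Dd' lF) as [DF [DF0 HDF]].
  set (c := Dd' k).
  set (Cw := exp (2 * om * DF)).
  set (M2 := (m0 * m0)%nat).
  set (Target := exp 1 * exp ((om + 1) * c)).
  set (Bbig := INR m0 + INR M2 * Cw * Target).
  destruct (HII Bbig) as [l [NDl [Hl Sl]]].
  change (fold_right (fun h acc => exp (- om * d o (act h o)) + acc) 0 l) with (lsum (w om) l) in Sl.
  set (pF := fun x => if excluded_middle_informative (F x) then true else false).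
  rewrite (lsum_filter _ pF l) in Sl.
  assert (SF : lsum (w om) (filter pF l) <= INR m0).
  { eapply Rle_trans. apply lsum_le_len with (c := 1). intros; apply (wt_le1 G X d Hd); auto.
    rewrite Rmult_1_r. apply le_INR. apply NoDup_incl_length. apply NoDup_filter; auto.
    intros x Ix. apply filter_In in Ix. destruct Ix as [_ Px]. unfold pF in Px.
    destruct (excluded_middle_informative (F x)); try discriminate. auto. }
  set (l1 := filter (fun x => negb (pF x)) l) in *.
  assert (Hl1 : forall x, In x l1 -> H x /\ ~ F x).
  { intros x Ix. apply filter_In in Ix. destruct Ix as [Ix Px]. unfold pF in Px.
    destruct (excluded_middle_informative (F x)); try discriminate. auto. }
  assert (Fmul := sub_mul _ _ _ _ _ HF). assert (Finv := sub_inv _ _ _ _ _ HF).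
  assert (Sel := select (dc G mul F) (w om) M2 Cw).
  destruct Sel with (l := l1) as [L [NDL [IL [PL SL]]]].
  - intro x. exists one, one. split; [apply (sub_one _ _ _ _ _ HF)|split; [apply (sub_one _ _ _ _ _ HF)|]].
    rewrite (grp_mulg1 _ _ _ _ HG), (grp_mul1g _ _ _ _ HG). auto.
  - intros x y [a [b [Fa [Fb ->]]]]. exists (inv a), (inv b). split; auto. split; auto.
    rewrite (grp_assoc _ _ _ _ HG), (grp_assoc _ _ _ _ HG), (grp_mulVg _ _ _ _ HG), (grp_mul1g _ _ _ _ HG).
    rewrite <- (grp_assoc _ _ _ _ HG), (grp_mulgV _ _ _ _ HG), (grp_mulg1 _ _ _ _ HG). auto.
  - intros x A NDA HA. unfold M2, m0.
    rewrite <- (length_prod lF lF), <- (length_map (fun p => mul (fst p) (mul x (snd p)))).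
    apply NoDup_incl_length; auto. intros y Iy. destruct (HA y Iy) as [a [b [Fa [Fb ->]]]].
    apply in_map_iff. exists (a, b). split; auto. apply in_prod; auto.
  - intros x y [a [b [Fa [Fb ->]]]]. unfold w, wt, Cw. rewrite <- exp_plus. apply exp_le.
    assert (Ex : x = mul (inv a) (mul (mul a (mul x b)) (inv b))).
    { rewrite (grp_assoc _ _ _ _ HG a x b), (g_mulKV _ _ _ _ HG), (grp_assoc _ _ _ _ HG), (grp_mulVg _ _ _ _ HG), (grp_mul1g _ _ _ _ HG). auto. }
    assert (D1 := Dd_mul G mul one X d Hd act Hact o (inv a) (mul (mul a (mul x b)) (inv b))).
    assert (D2 := Dd_mul G mul one X d Hd act Hact o (mul a (mul x b)) (inv b)).
    rewrite <- Ex in D1. rewrite !(Dd_inv G mul one inv HG X d Hd act Hact o) in D1, D2.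
    assert (Dd' a <= DF) by (apply HDF; auto). assert (Dd' b <= DF) by (apply HDF; auto).
    unfold Dd' in *. set (Dy := Dd G X d act o (mul a (mul x b))) in *.
    set (Dx := Dd G X d act o x) in *.
    assert (Dx <= Dy + 2 * DF) by lra. nra.
  - intro x. left. apply exp_pos.
  - apply NoDup_filter; auto.
  -
    assert (Cw0 : 0 < Cw) by apply exp_pos.
    assert (M20 : 0 < INR M2) by (apply lt_0_INR; unfold M2; lia).
    assert (SLbig : Target < lsum (w om) L).
    { assert (INR M2 * Cw * Target < INR M2 * Cw * lsum (w om) L) by (unfold Bbig in Sl; lra).
      apply Rmult_lt_reg_l in H0; auto. apply Rmult_lt_0_compat; auto. }
    assert (HL : forall x, In x L -> H x /\ ~ F x /\ In x L).
    { intros x Ix. destruct (Hl1 x (IL x Ix)). auto. }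
    destruct (bound_list Dd' L) as [DL [DL0 HDL]].
    set (s := om + / (DL + 1)).
    assert (e0 : 0 < / (DL + 1)) by (apply Rinv_0_lt_compat; lra).
    assert (e1 : / (DL + 1) <= 1).
    { rewrite <- Rinv_1. apply Rinv_le_contravar; lra. }
    assert (eK : / (DL + 1) * (DL + 1) = 1) by (field; lra).
    assert (s0 : 0 <= s) by (unfold s; lra).
    assert (Pt : forall h, In h L -> exp (-1) * w om h <= w s h).
    { intros h Ih. unfold w, wt. rewrite <- exp_plus. apply exp_le. fold Dd'.
      assert (Dd' h <= DL) by auto. specialize (Dd0 h). unfold s. nra. }
    set (u := fun h => w s h * exp (- s * c)).
    set (q := lsum u L).
    assert (q1 : 1 < q).
    { assert (Eq : q = exp (- s * c) * lsum (w s) L).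
      { unfold q, u. rewrite <- lsum_scal. apply lsum_ext. intro; ring. }
      assert (exp (-1) * lsum (w om) L <= lsum (w s) L).
      { rewrite <- lsum_scal. apply lsum_mono. auto. }
      assert (0 < exp (- s * c)) by apply exp_pos. assert (0 < exp (-1)) by apply exp_pos.
      assert (exp (- s * c) * (exp (-1) * Target) < q).
      { rewrite Eq. apply Rlt_le_trans with (exp (- s * c) * (exp (-1) * lsum (w om) L)).
        apply Rmult_lt_compat_l; auto. apply Rmult_lt_compat_l; auto.
        apply Rmult_le_compat_l; lra. }
      assert (1 <= exp (- s * c) * (exp (-1) * Target)).
      { unfold Target. rewrite <- !exp_plus. apply Rle_trans with (exp 0). rewrite exp_0; lra. apply exp_le.
        assert (0 <= c) by apply Dd0. assert (0 <= c * (1 - / (DL + 1))) by (apply Rmult_le_pos; lra).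
        unfold s. nra. }
      lra. }
    assert (Div : poincare_diverges G X d act o (fun _ => True) s).
    { intro B'. destruct (nat_above (B' / (q - 1))) as [n Hn].
      set (g := fun hs => amal_eval G mul one (word G k hs)).
      exists (map g (seqs L n)). split; [|split].
      - apply NoDup_map_NoDup_ForallPairs; [|apply seqs_nodup; auto].
        intros a b Ia Ib E. destruct (seqs_in L n a Ia) as [La Fa]. destruct (seqs_in L n b Ib) as [Lb Fb].
        apply (inj_seq G mul one inv HG F HF H K k nFk Kk Inj L PL a b); auto; try congruence.
        + eapply Forall_impl; [|exact Fa]. intros x Ix. apply HL; auto.
        + eapply Forall_impl; [|exact Fb]. intros x Ix. apply HL; auto.
      - auto.
      - change (fold_right (fun h acc => exp (- s * d o (act h o)) + acc) 0 (map g (seqs L n)))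
          with (lsum (w s) (map g (seqs L n))).
        rewrite lsum_map.
        assert (lsum (prodw u) (seqs L n) <= lsum (fun a => w s (g a)) (seqs L n)).
        { apply lsum_mono. intros hs _. apply (wt_word G mul one X d Hd act Hact o k s s0). }
        rewrite seqs_sum in H0. fold q in H0.
        assert (B1 := bernoulli q n ltac:(lra)).
        assert (B' <= INR n * (q - 1)).
        { apply Rle_div_l in Hn; [|lra]. lra. }
        lra. }
    assert (Cg := crit_ge G X d Hd act Hprop o (fun _ => True) s s0 Div).
    destruct (crit_exp G X d act o (fun _ => True)) as [r| |]; simpl in Cg |- *; auto. unfold s in Cg. lra.
Qed.
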